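(* Let $V$ be a Banach $\mathbb O$-bimodule, let $T\in\mathscr B_{\mathcal{RO}}(V)$ be power-associative and let $s\in\mathbb O$ with $|s|>\|T\|$. Then $R_s-T$ is invertible in $\mathscr B_{\mathbb R}(V)$ and $$(R_s-T)^{\circledcirc-}=\sum_{n\ge0}T^n\odot s^{-1-n},\qquad (R_s-T)^{-\circledcirc}=\sum_{n\ge0}s^{-1-n}\odot T^n,$$ the series converging (pointwise in norm) in $\mathscr B_{\mathcal{RO}}(V)$.
   Context: $\mathbb O$ is the real octonion algebra with basis $e_0=1,\dots,e_7$, conjugation $\bar x$, norm $|x|$. An $\mathbb O$-bimodule is a real vector space $M$ with real-bilinear left and right multiplications by $\mathbb O$ (with $1x=x1=x$) whose associators $[p,q,x]=(pq)x-p(qx)$, $[p,x,q]=(px)q-p(xq)$, $[x,p,q]=(xp)q-x(pq)$ satisfy $[p,q,x]=[q,x,p]=[x,p,q]=-[q,p,x]$. Its real part is $\operatorname{Re}M=\{m: pm=mp,\ [p,q,m]=0\ \forall p,q\}$; every $x$ decomposes uniquely as $x=\sum_{i=0}^7e_ix_i$ with $x_i\in\operatorname{Re}M$ and $\operatorname{Re}x:=x_0$. A Banach $\mathbb O$-bimodule is one with a complete norm with $\|px\|=\|xp\|=|p|\|x\|$. $\mathscr B_{\mathbb R}(V)$: bounded real-linear operators, ordinary composition and powers; $T$ is invertible if it has an inverse in $\mathscr B_{\mathbb R}(V)$. $R_sv=vs$. For real-linear $f$, $B_p(f,x)=f(x)p-f(xp)$; $f$ is right para-linear if $\operatorname{Re}B_p(f,x)=0$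 for all $p,x$; $\mathscr B_{\mathcal{RO}}(V)$ denotes bounded right para-linear operators, an $\mathbb O$-bimodule via $(p\odot f)(x)=pf(x)+B_p(f,x)$, $(f\odot p)(x)=f(px)-B_p(f,x)$. $T\in\mathscr B_{\mathcal{RO}}(V)$ is power-associative if $T^n\in\mathscr B_{\mathcal{RO}}(V)$ for all $n\in\mathbb N$. For real-linear $h:\operatorname{Re}V\to V$, $(\operatorname{ext}h)(\sum_ix_ie_i)=\sum_ih(x_i)e_i$ ($x_i\in\operatorname{Re}V$); for real-linear $h:V\to\operatorname{Re}V$, $(\operatorname{lif}h)(x)=\sum_{i=0}^7h(x\bar e_i)e_i$. For invertible $S\in\mathscr B_{\mathbb R}(V)$, the right and left regular inverses are $S^{\circledcirc-}=\operatorname{ext}(S^{-1}|_{\operatorname{Re}V})$ and $S^{-\circledcirc}=\operatorname{lif}(\operatorname{Re}\circ S^{-1})$. *)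

(* Defs.v *)
From HB Require Import structures.
From mathcomp Require Import all_boot all_order all_algebra.
From mathcomp Require Import all_classical all_reals all_analysis.
Set Implicit Arguments. Unset Strict Implicit. Unset Printing Implicit Defensive.
Import Order.TTheory GRing.Theory Num.Theory.
Local Open Scope ring_scope.
Local Open Scope classical_set_scope.

Section Octonions.
Variable R : realType.

Record quat := Quat { qr : R; qi : R; qj : R; qk : R }.

Definition qadd (a b : quat) := Quat (qr a + qr b) (qi a + qi b) (qj a + qj b) (qk a + qk b).
Definition qopp (a : quat) := Quat (- qr a) (- qi a) (- qj a) (- qk a).
Definition qscale (c : R) (a : quat) := Quat (c * qr a) (c * qi a) (c * qj a) (c * qk a).
Definition qconj (a : quat) := Quat (qr a) (- qi a) (- qj a) (- qk a).
Definition qmul (a b : quat) :=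
  Quat (qr a * qr b - qi a * qi b - qj a * qj b - qk a * qk b)
       (qr a * qi b + qi a * qr b + qj a * qk b - qk a * qj b)
       (qr a * qj b - qi a * qk b + qj a * qr b + qk a * qi b)
       (qr a * qk b + qi a * qj b - qj a * qi b + qk a * qr b).
Definition qnorm2 (a : quat) := qr a ^+ 2 + qi a ^+ 2 + qj a ^+ 2 + qk a ^+ 2.
Definition qzero := Quat 0 0 0 0.
Definition qone := Quat 1 0 0 0.

(* Octonions by the Cayley--Dickson construction:
   (a,b)(c,d) = (ac - conj(d) b, d a + b conj(c)). *)
Record oct := Oct { ofst : quat; osnd : quat }.

Definition oadd (x y : oct) := Oct (qadd (ofst x) (ofst y)) (qadd (osnd x) (osnd y)).
Definition oscale (c : R) (x : oct) := Oct (qscale c (ofst x)) (qscale c (osnd x)).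
Definition omul (x y : oct) :=
  Oct (qadd (qmul (ofst x) (ofst y)) (qopp (qmul (qconj (osnd y)) (osnd x))))
      (qadd (qmul (osnd y) (ofst x)) (qmul (osnd x) (qconj (ofst y)))).
Definition oconj (x : oct) := Oct (qconj (ofst x)) (qopp (osnd x)).
Definition oone := Oct qone qzero.
Definition onorm2 (x : oct) := qnorm2 (ofst x) + qnorm2 (osnd x).
Definition onorm (x : oct) : R := Num.sqrt (onorm2 x).
Definition octinv (x : oct) := oscale (onorm2 x)^-1 (oconj x).
(* x^n (octonions are power-associative) *)
Definition oexp (x : oct) (n : nat) := iter n (omul x) oone.

Definition qbasis (k : nat) : quat :=
  match k with
  | 0 => Quat 1 0 0 0 | 1 => Quat 0 1 0 0 | 2 => Quat 0 0 1 0 | _ => Quat 0 0 0 1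
  end.
Definition obasis (i : 'I_8) : oct :=
  if (i < 4)%N then Oct (qbasis i) qzero else Oct qzero (qbasis (i - 4)).

End Octonions.
Arguments obasis {R} i.
Arguments qbasis {R} k.
Arguments oone {R}.
Arguments qone {R}.
Arguments qzero {R}.

Section Bimodule.
Variables (R : realType) (V : normedModType R).
Variables (lm : oct R -> V -> V) (rm : V -> oct R -> V).

Definition assocL (p q : oct R) (x : V) := lm (omul p q) x - lm p (lm q x).
Definition assocM (p : oct R) (x : V) (q : oct R) := rm (lm p x) q - lm p (rm x q).
Definition assocR (x : V) (p q : oct R) := rm (rm x p) q - rm x (omul p q).

Definition is_real_elt (m : V) : Prop :=
  (forall p, lm p m = rm m p) /\ (forall p q, assocL p q m = 0).

Definition decomposes (x : V) (c : 'I_8 -> V) : Prop :=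
  (forall i, is_real_elt (c i)) /\ x = \sum_(i < 8) lm (obasis i) (c i).

(* Banach O-bimodule axioms; the unique decomposition x = sum e_i x_i with
   x_i in Re V is recorded as part of the setting. *)
Definition Banach_Obimodule : Prop :=
  (forall p (a : R) x y, lm p (a *: x + y) = a *: lm p x + lm p y) /\
  (forall p (a : R) x y, rm (a *: x + y) p = a *: rm x p + rm y p) /\
  (forall p q (a : R) x, lm (oadd (oscale a p) q) x = a *: lm p x + lm q x) /\
  (forall p q (a : R) x, rm x (oadd (oscale a p) q) = a *: rm x p + rm x q) /\
  (forall x, lm oone x = x /\ rm x oone = x) /\
  (forall p q x, assocL p q x = assocM q x p /\ assocM q x p = assocR x p q
                 /\ assocR x p q = - assocL q p x) /\
  (forall x, exists c, decomposes x c /\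
               forall c', decomposes x c' -> forall i, c' i = c i) /\
  (forall p x, `| lm p x | = onorm p * `| x | /\ `| rm x p | = onorm p * `| x |).

Definition comp (x : V) : 'I_8 -> V :=
  match pselect (exists c, decomposes x c) with
  | left h => projT1 (cid h)
  | right _ => fun _ => 0
  end.

Definition ReV (x : V) : V := comp x ord0.

Definition Bp (f : V -> V) (p : oct R) (x : V) : V := rm (f x) p - f (rm x p).

Definition right_paralinear (f : V -> V) : Prop := forall p x, ReV (Bp f p x) = 0.

Definition bounded_linear (f : V -> V) : Prop :=
  (forall (a : R) x y, f (a *: x + y) = a *: f x + f y) /\
  exists C : R, forall x, `| f x | <= C * `| x |.

Definition BRO (f : V -> V) : Prop := bounded_linear f /\ right_paralinear f.

Definition opnorm (f : V -> V) : R :=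
  inf [set C : R | 0 <= C /\ forall x, `| f x | <= C * `| x |].

Definition lodot (p : oct R) (f : V -> V) : V -> V := fun x => lm p (f x) + Bp f p x.
Definition rodot (f : V -> V) (p : oct R) : V -> V := fun x => f (lm p x) - Bp f p x.

Definition Rmul (s : oct R) : V -> V := fun v => rm v s.

Definition power_associative (T : V -> V) : Prop := forall n : nat, BRO (iter n T).

Definition ext (h : V -> V) : V -> V :=
  fun x => \sum_(i < 8) rm (h (comp x i)) (obasis i).
Definition lif (h : V -> V) : V -> V :=
  fun x => \sum_(i < 8) rm (h (rm x (oconj (obasis i)))) (obasis i).

Definition right_reg_inv (Sinv : V -> V) : V -> V := ext Sinv.
Definition left_reg_inv (Sinv : V -> V) : V -> V := lif (fun y => ReV (Sinv y)).

End Bimodule.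

(* Main.v *)
Require Import Defs.
From HB Require Import structures.
From mathcomp Require Import all_boot all_order all_algebra.
From mathcomp Require Import all_classical all_reals all_analysis.
From mathcomp Require Import ring lra.
Import Order.TTheory GRing.Theory Num.Theory numFieldNormedType.Exports.
Local Open Scope ring_scope.
Local Open Scope classical_set_scope.

Set Implicit Arguments. Unset Strict Implicit. Unset Printing Implicit Defensive.

Section OctLemmas.
Variable R : realType.
Implicit Types x y z p q : oct R.

Definition ore (x : oct R) : R := qr (ofst x).
Definition ozero : oct R := Oct qzero qzero.
Definition ocoord (x : oct R) (i : 'I_8) : R :=
  nth 0 [:: qr (ofst x); qi (ofst x); qj (ofst x); qk (ofst x);
            qr (osnd x); qi (osnd x); qj (osnd x); qk (osnd x)] i.

Lemma oct_ext (a0 a1 a2 a3 a4 a5 a6 a7 b0 b1 b2 b3 b4 b5 b6 b7 : R) :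
  a0 = b0 -> a1 = b1 -> a2 = b2 -> a3 = b3 -> a4 = b4 -> a5 = b5 -> a6 = b6 -> a7 = b7 ->
  Oct (Quat a0 a1 a2 a3) (Quat a4 a5 a6 a7) = Oct (Quat b0 b1 b2 b3) (Quat b4 b5 b6 b7).
Proof. by move=> -> -> -> -> -> -> -> ->. Qed.

Ltac odes := repeat match goal with [x : oct _ |- _] => destruct x as [[? ? ? ?] [? ? ? ?]] end.
Ltac ounf := cbv beta iota zeta delta [ore ozero omul oadd oscale oconj oone qone qzero qadd qmul qopp qconj qscale onorm2 qnorm2 Defs.ofst Defs.osnd Defs.qr Defs.qi Defs.qj Defs.qk].
Ltac oring := odes; ounf; first [apply: oct_ext; ring | ring].

Lemma ore_comm x y : ore (omul x y) = ore (omul y x).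
Proof. oring. Qed.
Lemma ore_assoc x y z : ore (omul (omul x y) z) = ore (omul x (omul y z)).
Proof. oring. Qed.
Lemma oscale1 x : oscale 1 x = x.
Proof. oring. Qed.
Lemma oadd0 x : oadd x ozero = x.
Proof. oring. Qed.

Lemma onorm2_mul x y : onorm2 (omul x y) = onorm2 x * onorm2 y.
Proof. oring. Qed.

Definition o0 : 'I_8 := @Ordinal 8 0 isT.
Definition o1 : 'I_8 := @Ordinal 8 1 isT.
Definition o2 : 'I_8 := @Ordinal 8 2 isT.
Definition o3 : 'I_8 := @Ordinal 8 3 isT.
Definition o4 : 'I_8 := @Ordinal 8 4 isT.
Definition o5 : 'I_8 := @Ordinal 8 5 isT.
Definition o6 : 'I_8 := @Ordinal 8 6 isT.
Definition o7 : 'I_8 := @Ordinal 8 7 isT.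

Lemma sum8 (U : nmodType) (f : 'I_8 -> U) :
  \sum_(i < 8) f i = f o0 + f o1 + f o2 + f o3 + f o4 + f o5 + f o6 + f o7.
Proof.
rewrite !big_ord_recr big_ord0 /= add0r.
by repeat congr (_ + _); congr f; apply: val_inj.
Qed.

Lemma ord8_cases (P : 'I_8 -> Prop) :
  P o0 -> P o1 -> P o2 -> P o3 -> P o4 -> P o5 -> P o6 -> P o7 -> forall i, P i.
Proof.
move=> h0 h1 h2 h3 h4 h5 h6 h7 [[|[|[|[|[|[|[|[|i]]]]]]]] Hi] //.
- by have -> : Ordinal Hi = o0 by apply: val_inj.
- by have -> : Ordinal Hi = o1 by apply: val_inj.
- by have -> : Ordinal Hi = o2 by apply: val_inj.
- by have -> : Ordinal Hi = o3 by apply: val_inj.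
- by have -> : Ordinal Hi = o4 by apply: val_inj.
- by have -> : Ordinal Hi = o5 by apply: val_inj.
- by have -> : Ordinal Hi = o6 by apply: val_inj.
- by have -> : Ordinal Hi = o7 by apply: val_inj.
Qed.

Lemma ob0 : obasis o0 = Oct (Quat 1 0 0 0) (Quat 0 0 0 0) :> oct R. Proof. by []. Qed.
Lemma ob1 : obasis o1 = Oct (Quat 0 1 0 0) (Quat 0 0 0 0) :> oct R. Proof. by []. Qed.
Lemma ob2 : obasis o2 = Oct (Quat 0 0 1 0) (Quat 0 0 0 0) :> oct R. Proof. by []. Qed.
Lemma ob3 : obasis o3 = Oct (Quat 0 0 0 1) (Quat 0 0 0 0) :> oct R. Proof. by []. Qed.
Lemma ob4 : obasis o4 = Oct (Quat 0 0 0 0) (Quat 1 0 0 0) :> oct R. Proof. by []. Qed.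
Lemma ob5 : obasis o5 = Oct (Quat 0 0 0 0) (Quat 0 1 0 0) :> oct R. Proof. by []. Qed.
Lemma ob6 : obasis o6 = Oct (Quat 0 0 0 0) (Quat 0 0 1 0) :> oct R. Proof. by []. Qed.
Lemma ob7 : obasis o7 = Oct (Quat 0 0 0 0) (Quat 0 0 0 1) :> oct R. Proof. by []. Qed.
Definition obE := (ob0, ob1, ob2, ob3, ob4, ob5, ob6, ob7).

Lemma ocoordE x : (ocoord x o0 = qr (ofst x)) * (ocoord x o1 = qi (ofst x)) *
  (ocoord x o2 = qj (ofst x)) * (ocoord x o3 = qk (ofst x)) *
  (ocoord x o4 = qr (osnd x)) * (ocoord x o5 = qi (osnd x)) *
  (ocoord x o6 = qj (osnd x)) * (ocoord x o7 = qk (osnd x)).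
Proof. by []. Qed.

Lemma oct_sum8 x : x =
  oadd (oscale (ocoord x o0) (obasis o0)) (oadd (oscale (ocoord x o1) (obasis o1))
  (oadd (oscale (ocoord x o2) (obasis o2)) (oadd (oscale (ocoord x o3) (obasis o3))
  (oadd (oscale (ocoord x o4) (obasis o4)) (oadd (oscale (ocoord x o5) (obasis o5))
  (oadd (oscale (ocoord x o6) (obasis o6)) (oscale (ocoord x o7) (obasis o7)))))))).
Proof. rewrite !ocoordE !obE; oring. Qed.

Lemma oexpand (U : lmodType R) (F : oct R -> U) :
  (forall p q, F (oadd p q) = F p + F q) -> (forall a p, F (oscale a p) = a *: F p) ->
  forall x, F x = \sum_(i < 8) ocoord x i *: F (obasis i).
Proof.
move=> FD FZ x; rewrite sum8 {1}(oct_sum8 x) !FD !FZ.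
by rewrite !addrA.
Qed.

Lemma ore_basis_conj i j : ore (omul (obasis i) (oconj (obasis j))) = (i == j)%:R.
Proof.
elim/ord8_cases: i; elim/ord8_cases: j; rewrite !obE /=; ounf; ring.
Qed.

Lemma ore_basis i : ore (obasis i) = (i == o0)%:R.
Proof. by elim/ord8_cases: i; rewrite !obE /=; ounf. Qed.

Lemma conj_basis0 : oconj (obasis o0) = oone :> oct R.
Proof. rewrite obE; oring. Qed.

Lemma basis_conj_coord p i :
  oscale (ore (omul (obasis i) p)) (oconj (obasis i)) = oscale (ocoord p i) (obasis i).
Proof. elim/ord8_cases: i; rewrite !obE ?ocoordE; oring. Qed.

Lemma basis_avg a :
  oadd (oscale 4 a)
  (oadd (omul (obasis o0) (omul a (oconj (obasis o0))))
  (oadd (omul (obasis o1) (omul a (oconj (obasis o1))))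
  (oadd (omul (obasis o2) (omul a (oconj (obasis o2))))
  (oadd (omul (obasis o3) (omul a (oconj (obasis o3))))
  (oadd (omul (obasis o4) (omul a (oconj (obasis o4))))
  (oadd (omul (obasis o5) (omul a (oconj (obasis o5))))
  (oadd (omul (obasis o6) (omul a (oconj (obasis o6))))
        (omul (obasis o7) (omul a (oconj (obasis o7)))))))))))
  = oscale (12 * ore a) oone.
Proof. rewrite !obE; oring. Qed.

Lemma onorm2_ge0 x : 0 <= onorm2 x.
Proof.
odes; ounf.
by do ! (apply: addr_ge0 || apply: sqr_ge0).
Qed.

Lemma onormM x y : onorm (omul x y) = onorm x * onorm y.
Proof. by rewrite /onorm onorm2_mul sqrtrM // onorm2_ge0. Qed.

Lemma onorm_one : onorm (@oone R) = 1.
Proof.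
rewrite /onorm (_ : onorm2 oone = 1) ?sqrtr1 //; ounf; ring.
Qed.

Lemma onorm_zero : onorm ozero = 0.
Proof. rewrite /onorm (_ : onorm2 ozero = 0) ?sqrtr0 //; ounf; ring. Qed.

Lemma onorm_basis i : onorm (obasis i : oct R) = 1.
Proof.
rewrite /onorm (_ : onorm2 (obasis i) = 1) ?sqrtr1 //.
elim/ord8_cases: i; rewrite !obE; ounf; ring.
Qed.

Lemma onorm_basis_conj i : onorm (oconj (obasis i : oct R)) = 1.
Proof.
rewrite /onorm (_ : onorm2 (oconj (obasis i)) = 1) ?sqrtr1 //.
elim/ord8_cases: i; rewrite !obE; ounf; ring.
Qed.

Lemma onorm2_inv x : onorm2 x != 0 -> onorm2 (octinv x) = (onorm2 x)^-1.
Proof.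
move=> h; rewrite /octinv.
have -> : onorm2 (oscale (onorm2 x)^-1 (oconj x)) = (onorm2 x)^-1 ^+ 2 * onorm2 x.
  by move: (onorm2 x)^-1 => c; oring.
by rewrite expr2 -mulrA mulVf // mulr1.
Qed.

Lemma onorm_inv x : onorm2 x != 0 -> onorm (octinv x) = (onorm x)^-1.
Proof. by move=> h; rewrite /onorm onorm2_inv // sqrtrV // onorm2_ge0. Qed.

Definition sp (s : oct R) (a b : R) := oadd (oscale a oone) (oscale b s).

Lemma sp_mul s a b c d :
  omul (sp s a b) (sp s c d) =
  sp s (a * c - b * d * onorm2 s) (a * d + b * c + 2 * ore s * b * d).
Proof. rewrite /sp; oring. Qed.

Lemma sp_one s : oone = sp s 1 0.
Proof. rewrite /sp; oring. Qed.
Lemma sp_s s : s = sp s 0 1.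
Proof. rewrite /sp; oring. Qed.
Lemma sp_inv s c : oscale c (oconj s) = sp s (2 * ore s * c) (- c).
Proof. rewrite /sp; oring. Qed.

Lemma omul1l q : omul oone q = q. Proof. oring. Qed.
Lemma omul1r q : omul q oone = q. Proof. oring. Qed.
Lemma omul0l q : omul ozero q = ozero. Proof. oring. Qed.
Lemma omul0r q : omul q ozero = ozero. Proof. oring. Qed.
Lemma omul_linl a p q r : omul (oadd (oscale a p) q) r = oadd (oscale a (omul p r)) (omul q r).
Proof. oring. Qed.
Lemma omul_linr a p q r : omul r (oadd (oscale a p) q) = oadd (oscale a (omul r p)) (omul r q).
Proof. oring. Qed.
End OctLemmas.

Arguments ozero {R}.


Section Anal.
Variable R : realType.

Lemma le_of_eq (x y : R) : x = y -> x <= y.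
Proof. by move=> ->. Qed.

Lemma cvg_bound (V : normedModType R) (u : nat -> V) (l : V) (e : nat -> R) :
  e @ \oo --> 0 -> (forall n, `|u n - l| <= e n) -> u @ \oo --> l.
Proof.
move=> e0 ule; apply/cvgrPdist_le => eps eps0.
move/cvgrPdist_le: e0 => /(_ eps eps0); apply: filterS => n.
rewrite sub0r normrN => h; rewrite distrC; apply: le_trans (ule n) _.
exact: le_trans (ler_norm _) h.
Qed.

Lemma cst_bound (V : normedModType R) (c l : V) (e : nat -> R) :
  e @ \oo --> 0 -> (forall n, `|c - l| <= e n) -> c = l.
Proof.
move=> e0 h; have := @cvg_bound V (fun=> c) l e e0 h.
move=> h2; exact: (cvg_unique _ (cvg_cst c) h2).
Qed.

Lemma geo0 (c k : R) : 0 <= k -> k < 1 -> (fun n => c * k ^+ n) @ \oo --> 0.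
Proof.
move=> k0 k1; have := @cvg_geometric R c k; rewrite ger0_norm //; by apply.
Qed.

Lemma geo_sum_le (k : R) N : 0 <= k -> k < 1 -> \sum_(i < N) k ^+ i <= (1 - k)^-1.
Proof.
move=> k0 k1.
have e : (1 - k) * \sum_(i < N) k ^+ i = 1 - k ^+ N.
  elim: N => [|N IH]; first by rewrite big_ord0 mulr0 expr0 subrr.
  by rewrite big_ord_recr /= mulrDr IH exprS; ring.
have k1' : 0 < 1 - k by rewrite subr_gt0.
rewrite -[X in X <= _](mulKf (lt0r_neq0 k1')) e.
apply: ler_piMr; first by rewrite invr_ge0 ltW.
by rewrite lerBlDr lerDl; exact: exprn_ge0.
Qed.

Section Neumann.
Variables (V : normedModType R) (K : V -> V) (k : R).
Hypothesis Vc : forall u : nat -> V, cvgn [normed series u] -> cvgn (series u).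
Hypotheses (KL : forall (a : R) x y, K (a *: x + y) = a *: K x + K y)
  (Kb : forall x, `|K x| <= k * `|x|) (k0 : 0 <= k) (k1 : k < 1).

Lemma K0 : K 0 = 0.
Proof.
have h := KL 1 0 0; rewrite !scale1r addr0 in h.
by apply: (addrI (K 0)); rewrite addr0 -h.
Qed.
Lemma KD x y : K (x + y) = K x + K y.
Proof. by have := KL 1 x y; rewrite !scale1r. Qed.
Lemma KZ a x : K (a *: x) = a *: K x.
Proof. by have := KL a x 0; rewrite addr0 K0 addr0. Qed.
Lemma KB x y : K (x - y) = K x - K y.
Proof. by rewrite KD -scaleN1r KZ scaleN1r. Qed.

Lemma Kpow n x : `|iter n K x| <= k ^+ n * `|x|.
Proof.
elim: n => [|n IH]; first by rewrite expr0 mul1r.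
rewrite iterS; apply: le_trans (Kb _) _; rewrite exprS -mulrA.
exact: ler_wpM2l.
Qed.

Lemma iterK_lin n (a : R) x y : iter n K (a *: x + y) = a *: iter n K x + iter n K y.
Proof. by elim: n => [//|n IH]; rewrite !iterS IH KL. Qed.

Lemma iterKB n x y : iter n K (x - y) = iter n K x - iter n K y.
Proof. by rewrite addrC -scaleN1r iterK_lin scaleN1r addrC. Qed.

Definition Ssum y N := \sum_(i < N) iter i K y.

Lemma Ssum_series y : Ssum y = series (fun i => iter i K y).
Proof. by apply/funext => N; rewrite /Ssum /series /= big_mkord. Qed.

Lemma Scvg y : cvgn (series (fun i => iter i K y)).
Proof.
apply: Vc.
apply: (@series_le_cvg R _ (geometric `|y| k)).
- by move=> n; exact: normr_ge0.
- by move=> n; rewrite /geometric /=; apply: mulr_ge0 => //; exact: exprn_ge0.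
- by move=> n; rewrite /geometric /= mulrC; exact: Kpow.
- apply: is_cvg_geometric_series; rewrite ger0_norm //.
Qed.

Definition G y := limn (series (fun i => iter i K y)).

Lemma Sdiff y N M : (N <= M)%N -> `|Ssum y M - Ssum y N| <= k ^+ N * (1 - k)^-1 * `|y|.
Proof.
move=> NM; rewrite /Ssum -(subnKC NM) big_split_ord /= [X in `|X|]addrAC subrr add0r.
apply: le_trans (ler_norm_sum _ _ _) _.
have -> : \sum_(i < M - N) `|iter (N + i) K y| = \sum_(i < M - N) `|iter i K (iter N K y)|.
  by apply: eq_bigr => i _; rewrite addnC iterD.
apply: (@le_trans _ _ (\sum_(i < M - N) k ^+ i * (k ^+ N * `|y|))).
  apply: ler_sum => i _; apply: le_trans (Kpow _ _) _; apply: ler_wpM2l; first exact: exprn_ge0.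
  exact: Kpow.
rewrite -mulr_suml mulrA; apply: ler_wpM2r => //.
by rewrite mulrC; apply: ler_wpM2l; [apply: exprn_ge0|apply: geo_sum_le].
Qed.

Lemma Gtail y N : `|G y - Ssum y N| <= k ^+ N * (1 - k)^-1 * `|y|.
Proof.
have c := @Scvg y; rewrite -Ssum_series in c.
have c2 : (fun M => Ssum y M - Ssum y N) @ \oo --> G y - Ssum y N.
  by apply: cvgB => //; [rewrite /G -Ssum_series | exact: cvg_cst].
rewrite -(cvg_lim _ c2) // -lim_norm; last exact: cvgP c2.
apply: limr_le; first by apply: is_cvg_norm; exact: cvgP c2.
near=> M; apply: Sdiff; near: M; exact: nbhs_infty_ge.
Unshelve. all: by end_near.
Qed.

Lemma Ssum_lin (a : R) x y N : Ssum (a *: x + y) N = a *: Ssum x N + Ssum y N.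
Proof.
rewrite /Ssum scaler_sumr -big_split /=; apply: eq_bigr => i _; exact: iterK_lin.
Qed.

Lemma Ssum0 y : Ssum y 0 = 0.
Proof. by rewrite /Ssum big_ord0. Qed.

Lemma Ssum_tel1 y N : Ssum (y - K y) N = y - iter N K y.
Proof.
elim: N => [|N IH]; first by rewrite Ssum0 /= subrr.
rewrite /Ssum big_ord_recr /= -/(Ssum _ _) IH.
have -> : iter N K (y - K y) = iter N K y - iter N.+1 K y.
  by rewrite iterKB iterSr.
by rewrite addrA subrK.
Qed.

Lemma Ssum_tel2 y N : Ssum y N - K (Ssum y N) = y - iter N K y.
Proof.
elim: N => [|N IH]; first by rewrite Ssum0 K0 subrr /= subrr.
rewrite /Ssum big_ord_recr /= -/(Ssum _ _) KD.
have -> : forall a b c d : V, a + b - (c + d) = (a - c) + (b - d).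
  by move=> a b c d; rewrite opprD addrACA.
by rewrite IH addrA subrK.
Qed.

Lemma G_bound y : `|G y| <= (1 - k)^-1 * `|y|.
Proof. by have := Gtail y 0; rewrite Ssum0 subr0 expr0 mul1r. Qed.

Lemma km1 : 0 <= (1 - k)^-1.
Proof. by rewrite invr_ge0 subr_ge0 ltW. Qed.

Lemma G_lin (a : R) x y : G (a *: x + y) = a *: G x + G y.
Proof.
pose D := (1 - k)^-1 * `|a *: x + y| + (`|a| * ((1 - k)^-1 * `|x|) + (1 - k)^-1 * `|y|).
apply: (@cst_bound _ _ _ (fun N => D * k ^+ N)); first exact: geo0.
move=> N.
apply: le_trans (ler_distD (Ssum (a *: x + y) N) _ _) _.
rewrite /D !mulrDl; apply: lerD.
  by apply: le_trans (Gtail _ _) _; rewrite -mulrA mulrC.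
rewrite Ssum_lin opprD addrACA -scalerBr.
apply: le_trans (ler_normD _ _) _; apply: lerD.
  rewrite normrZ distrC [_ * k ^+ N]mulrC mulrCA; apply: ler_wpM2l => //.
  by apply: le_trans (Gtail _ _) _; rewrite mulrA.
by rewrite distrC; apply: le_trans (Gtail _ _) _; rewrite -mulrA mulrC.
Qed.

Lemma G_left y : G (y - K y) = y.
Proof.
apply: (@cst_bound _ _ _ (fun N => ((1 - k)^-1 * `|y - K y| + `|y|) * k ^+ N)); first exact: geo0.
move=> N.
apply: le_trans (ler_distD (Ssum (y - K y) N) _ _) _.
rewrite mulrDl; apply: lerD.
  by apply: le_trans (Gtail _ _) _; rewrite -mulrA mulrC.
by rewrite Ssum_tel1 addrAC subrr add0r normrN mulrC; exact: Kpow.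
Qed.

Lemma G_right y : G y - K (G y) = y.
Proof.
apply: (@cst_bound _ _ _ (fun N => ((1 + k) * ((1 - k)^-1 * `|y|) + `|y|) * k ^+ N)); first exact: geo0.
move=> N.
apply: le_trans (ler_distD (Ssum y N - K (Ssum y N)) _ _) _.
rewrite mulrDl; apply: lerD; last first.
  by rewrite Ssum_tel2 addrAC subrr add0r normrN mulrC; exact: Kpow.
rewrite opprD opprK addrACA [- K (G y) + _]addrC -opprB -KB.
apply: le_trans (ler_normD _ _) _; rewrite normrN mulrDl mul1r mulrDl.
apply: lerD.
  rewrite distrC; apply: le_trans; first exact: Gtail.
  by apply: le_of_eq; ring.
apply: le_trans (Kb _) _; rewrite distrC.
apply: le_trans; first exact: (ler_wpM2l k0 (Gtail _ _)).
by apply: le_of_eq; ring.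
Qed.

End Neumann.
End Anal.

Unset Implicit Arguments.

Section Bim.
Variables (R : realType) (V : normedModType R).
Variables (lm : oct R -> V -> V) (rm : V -> oct R -> V).
Hypothesis HB : Banach_Obimodule lm rm.

Local Notation RV := (Defs.ReV lm rm).
Local Notation comp := (Defs.comp lm rm).
Local Notation isreal := (is_real_elt lm rm).
Local Notation dec := (decomposes lm rm).

Lemma lmL p a x y : lm p (a *: x + y) = a *: lm p x + lm p y.
Proof. by case: HB. Qed.
Lemma rmL p a x y : rm (a *: x + y) p = a *: rm x p + rm y p.
Proof. by case: HB => _ []. Qed.
Lemma lmO p q a x : lm (oadd (oscale a p) q) x = a *: lm p x + lm q x.
Proof. by case: HB => _ [_ []]. Qed.
Lemma rmO p q a x : rm x (oadd (oscale a p) q) = a *: rm x p + rm x q.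
Proof. by case: HB => _ [_ [_ []]]. Qed.
Lemma lm1 x : lm oone x = x.
Proof. by case: HB => _ [_ [_ [_ [h _]]]]; case: (h x). Qed.
Lemma rm1 x : rm x oone = x.
Proof. by case: HB => _ [_ [_ [_ [h _]]]]; case: (h x). Qed.
Lemma assoc3 p q x : assocL lm p q x = assocM lm rm q x p /\ assocM lm rm q x p = assocR rm x p q
                 /\ assocR rm x p q = - assocL lm q p x.
Proof. by case: HB => _ [_ [_ [_ [_ [h _]]]]]. Qed.
Lemma dec_ex x : exists c, dec x c /\ forall c', dec x c' -> forall i, c' i = c i.
Proof. by case: HB => _ [_ [_ [_ [_ [_ [h _]]]]]]. Qed.
Lemma norm_lm p x : `|lm p x| = onorm p * `|x|.
Proof. by case: HB => _ [_ [_ [_ [_ [_ [_ h]]]]]]; case: (h p x). Qed.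
Lemma norm_rm p x : `|rm x p| = onorm p * `|x|.
Proof. by case: HB => _ [_ [_ [_ [_ [_ [_ h]]]]]]; case: (h p x). Qed.

Definition flin (f : V -> V) := forall (a : R) x y, f (a *: x + y) = a *: f x + f y.

Section Flin.
Variable f : V -> V.
Hypothesis fL : flin f.
Lemma f0 : f 0 = 0.
Proof.
have h := fL 1 0 0; rewrite !scale1r addr0 in h.
by apply: (addrI (f 0)); rewrite addr0 -h.
Qed.
Lemma fD x y : f (x + y) = f x + f y.
Proof. by have := fL 1 x y; rewrite !scale1r. Qed.
Lemma fZ a x : f (a *: x) = a *: f x.
Proof. by have := fL a x 0; rewrite addr0 f0 addr0. Qed.
Lemma fN x : f (- x) = - f x.
Proof. by rewrite -scaleN1r fZ scaleN1r. Qed.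
Lemma fB x y : f (x - y) = f x - f y.
Proof. by rewrite fD fN. Qed.
Lemma f_sum I r (P : pred I) (F : I -> V) :
  f (\sum_(i <- r | P i) F i) = \sum_(i <- r | P i) f (F i).
Proof. exact: (big_morph _ fD f0). Qed.
End Flin.
Arguments f0 {f}. Arguments fD {f}. Arguments fZ {f}. Arguments fN {f}. Arguments fB {f}. Arguments f_sum {f}.

Lemma lm_flin p : flin (lm p). Proof. exact: lmL. Qed.
Lemma rm_flin p : flin (rm^~ p). Proof. move=> a x y; exact: rmL. Qed.
Definition lm0 p := f0 (lm_flin p).
Definition lmD p := fD (lm_flin p).
Definition lmZ p := fZ (lm_flin p).
Definition lmB p := fB (lm_flin p).
Definition lm_sum p := f_sum (lm_flin p).
Definition rm0 p := f0 (rm_flin p).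
Definition rmD p := fD (rm_flin p).
Definition rmZ p := fZ (rm_flin p).
Definition rmB p := fB (rm_flin p).
Definition rm_sum p := f_sum (rm_flin p).

Lemma lmO0 x : lm ozero x = 0.
Proof. by apply/normr0_eq0; rewrite norm_lm onorm_zero mul0r. Qed.
Lemma rmO0 x : rm x ozero = 0.
Proof. by apply/normr0_eq0; rewrite norm_rm onorm_zero mul0r. Qed.
Lemma lmOD p q x : lm (oadd p q) x = lm p x + lm q x.
Proof. by have := lmO p q 1 x; rewrite oscale1 scale1r. Qed.
Lemma lmOZ a p x : lm (oscale a p) x = a *: lm p x.
Proof. by have := lmO p ozero a x; rewrite oadd0 lmO0 addr0. Qed.
Lemma rmOD p q x : rm x (oadd p q) = rm x p + rm x q.
Proof. by have := rmO p q 1 x; rewrite oscale1 scale1r. Qed.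
Lemma rmOZ a p x : rm x (oscale a p) = a *: rm x p.
Proof. by have := rmO p ozero a x; rewrite oadd0 rmO0 addr0. Qed.

Lemma lm_expand a x : lm a x = \sum_(i < 8) ocoord a i *: lm (obasis i) x.
Proof. exact: (@oexpand _ _ (lm^~ x) (fun p q => lmOD p q x) (fun a p => lmOZ a p x)). Qed.
Lemma rm_expand a x : rm x a = \sum_(i < 8) ocoord a i *: rm x (obasis i).
Proof. exact: (@oexpand _ _ (rm x) (fun p q => rmOD p q x) (fun a p => rmOZ a p x)). Qed.

Lemma aR_alt x p q : assocR rm x p q = - assocR rm x q p.
Proof.
have [_ [_ h1]] := assoc3 p q x.
have [h2 [h3 _]] := assoc3 q p x.
by rewrite h1 h2 h3.
Qed.

Lemma aR_pp x p : assocR rm x p p = 0.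
Proof.
have h := aR_alt x p p.
have : (2 : R) *: assocR rm x p p = 0.
  by rewrite scaler_nat mulr2n {1}h addNr.
by move/eqP; rewrite scaler_eq0 pnatr_eq0 /= => /eqP.
Qed.

Lemma real_rm m p : isreal m -> rm m p = lm p m.
Proof. by case=> h _; rewrite h. Qed.
Lemma real_lmlm m p q : isreal m -> lm p (lm q m) = lm (omul p q) m.
Proof. by case=> _ h; apply/eqP; rewrite eq_sym -subr_eq0; apply/eqP; exact: h. Qed.
Lemma real_rmlm m p q : isreal m -> rm (lm p m) q = lm (omul p q) m.
Proof.
move=> hm; have [h _] := assoc3 q p m.
have : assocM lm rm p m q = 0 by rewrite -h; case: hm => _ ->.
rewrite /assocM => /eqP; rewrite subr_eq0 => /eqP ->.
by rewrite real_rm // real_lmlm.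
Qed.
Lemma real_rmrm m p q : isreal m -> rm (rm m p) q = rm m (omul p q).
Proof. by move=> hm; rewrite (real_rm _ p hm) (real_rm _ (omul p q) hm) (real_rmlm _ p q hm). Qed.

Lemma real_lin a x y : isreal x -> isreal y -> isreal (a *: x + y).
Proof.
move=> [hx1 hx2] [hy1 hy2]; split.
  by move=> p; rewrite lmL rmL hx1 hy1.
move=> p q; rewrite /assocL !lmL.
have := hx2 p q; have := hy2 p q; rewrite /assocL => /eqP; rewrite subr_eq0 => /eqP ->.
move=> /eqP; rewrite subr_eq0 => /eqP ->; by rewrite subrr.
Qed.
Lemma real0 : isreal 0.
Proof. by split=> [p|p q]; rewrite ?lm0 ?rm0 // /assocL !lm0 subrr. Qed.
Lemma realD x y : isreal x -> isreal y -> isreal (x + y).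
Proof. by move=> hx hy; have := real_lin 1 x y hx hy; rewrite scale1r. Qed.
Lemma realZ a x : isreal x -> isreal (a *: x).
Proof. by move=> hx; have := real_lin a x 0 hx real0; rewrite addr0. Qed.
Lemma real_sum I r (P : pred I) (F : I -> V) :
  (forall i, isreal (F i)) -> isreal (\sum_(i <- r | P i) F i).
Proof. move=> h; elim/big_ind: _ => //; [exact: real0 | exact: realD]. Qed.


Lemma comp_dec x : dec x (comp x).
Proof.
rewrite /Defs.comp; case: pselect => [h|h]; first exact: projT2 (cid h).
by exfalso; have [c [hc _]] := dec_ex x; apply: h; exists c.
Qed.

Lemma comp_uniq x c : dec x c -> forall i, comp x i = c i.
Proof.
move=> hc i; have [c0 [_ u]] := dec_ex x.
by rewrite (u _ (comp_dec x)) (u _ hc).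
Qed.

Lemma comp_real x i : isreal (comp x i).
Proof. by case: (comp_dec x) => h _; exact: h. Qed.

Local Hint Resolve comp_real : core.

Lemma decompE x : x = \sum_(i < 8) lm (obasis i) (comp x i).
Proof. by case: (comp_dec x). Qed.

Lemma comp_lm a m i : isreal m -> comp (lm a m) i = ocoord a i *: m.
Proof.
move=> hm; apply: (@comp_uniq (lm a m) (fun j => ocoord a j *: m)); split; first by move=> j; exact: realZ.
by rewrite lm_expand; apply: eq_bigr => j _; rewrite lmZ.
Qed.

Lemma comp_lin a x y i : comp (a *: x + y) i = a *: comp x i + comp y i.
Proof.
apply: (@comp_uniq _ (fun j => a *: comp x j + comp y j)); split; first by move=> j; apply: real_lin; exact: comp_real.
rewrite {1}(decompE x) {1}(decompE y) scaler_sumr -big_split /=.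
by apply: eq_bigr => j _; rewrite lmL.
Qed.

Lemma comp_flin i : flin (comp^~ i).
Proof. move=> a x y; exact: comp_lin. Qed.

Lemma ord0E : (ord0 : 'I_8) = o0. Proof. exact: val_inj. Qed.

Lemma Re_flin : flin RV.
Proof. exact: comp_flin. Qed.
Definition Re0 := f0 Re_flin.
Definition ReD := fD Re_flin.
Definition ReZ := fZ Re_flin.
Definition ReN := fN Re_flin.
Definition ReB := fB Re_flin.
Definition Re_sum := f_sum Re_flin.

Lemma Re_lm a m : isreal m -> RV (lm a m) = ore a *: m.
Proof. by move=> hm; rewrite /Defs.ReV comp_lm. Qed.

Lemma Re_rm_real m a : isreal m -> RV (rm m a) = ore a *: m.
Proof. by move=> hm; rewrite real_rm // Re_lm. Qed.

Lemma Re_lm_rm a y : RV (lm a y) = RV (rm y a).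
Proof.
rewrite (decompE y) lm_sum rm_sum !Re_sum; apply: eq_bigr => i _.
rewrite real_lmlm ?comp_real // real_rmlm ?comp_real //.
by rewrite !Re_lm ?comp_real // ore_comm.
Qed.

Lemma Re_assocR y p q : RV (rm (rm y p) q) = RV (rm y (omul p q)).
Proof.
rewrite (decompE y) !rm_sum !Re_sum; apply: eq_bigr => i _.
rewrite !real_rmlm ?comp_real // !Re_lm ?comp_real //.
by rewrite ore_assoc.
Qed.

Lemma Re_assocM q y p : RV (rm (lm q y) p) = RV (lm q (rm y p)).
Proof.
have [_ [h _]] := assoc3 p q y.
have : RV (assocM lm rm q y p) = 0.
  by rewrite h /assocR ReB Re_assocR subrr.
by rewrite /assocM ReB => /eqP; rewrite subr_eq0 => /eqP.
Qed.

Lemma comp_Re y j : comp y j = RV (rm y (oconj (obasis j))).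
Proof.
rewrite {2}(decompE y) rm_sum Re_sum.
under eq_bigr do rewrite real_rmlm ?comp_real // Re_lm ?comp_real // ore_basis_conj.
rewrite (bigD1 j) //= eqxx scale1r big1 ?addr0 //.
by move=> k /negbTE ->; rewrite scale0r.
Qed.

Lemma recon y : y = \sum_(j < 8) rm (RV (rm y (oconj (obasis j)))) (obasis j).
Proof.
under eq_bigr do rewrite -comp_Re real_rm ?comp_real //.
exact: decompE.
Qed.

Lemma comp_rm x p j : comp (rm x p) j = \sum_(i < 8) ocoord (omul (obasis i) p) j *: comp x i.
Proof.
apply: (@comp_uniq _ (fun j => \sum_(i < 8) ocoord (omul (obasis i) p) j *: comp x i)); split.
  by move=> k; apply: real_sum => i; apply: realZ; exact: comp_real.
rewrite {1}(decompE x) rm_sum.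
under eq_bigr do rewrite real_rmlm ?comp_real // lm_expand.
rewrite exchange_big /=; apply: eq_bigr => k _.
by rewrite lm_sum; apply: eq_bigr => i _; rewrite lmZ.
Qed.

Lemma avg_real a m : isreal m ->
  4 *: lm a m + \sum_(k < 8) lm (obasis k) (rm (lm a m) (oconj (obasis k))) = (12 * ore a) *: m.
Proof.
move=> hm; under eq_bigr do rewrite real_rmlm // real_lmlm //.
have := congr1 (fun p => lm p m) (basis_avg a).
rewrite !lmOD !lmOZ lm1 => <-.
by rewrite sum8 !addrA.
Qed.

Lemma Re_avg y : (12 : R) *: RV y = 4 *: y + \sum_(k < 8) lm (obasis k) (rm y (oconj (obasis k))).
Proof.
have e : \sum_(k < 8) lm (obasis k) (rm y (oconj (obasis k))) =
  \sum_(i < 8) \sum_(k < 8) lm (obasis k) (rm (lm (obasis i) (comp y i)) (oconj (obasis k))).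
  rewrite {1}(decompE y); under eq_bigr do rewrite rm_sum lm_sum; exact: exchange_big.
rewrite e {1 2}(decompE y) Re_sum !scaler_sumr -big_split /=.
apply: eq_bigr => i _; rewrite avg_real ?comp_real //.
by rewrite Re_lm ?comp_real // scalerA.
Qed.

Lemma Re_bound y : `|RV y| <= `|y|.
Proof.
have h : `|(12 : R) *: RV y| <= 12 * `|y|.
  rewrite Re_avg.
  apply: le_trans (ler_normD _ _) _.
  apply: le_trans (lerD (lexx _) (ler_norm_sum _ _ _)) _.
  under eq_bigr do rewrite norm_lm norm_rm onorm_basis onorm_basis_conj !mul1r.
  rewrite sumr_const card_ord normrZ ger0_norm // -mulr_natr; lra.
by rewrite normrZ ger0_norm // ler_pM2l in h.
Qed.

Lemma comp_bound x i : `|comp x i| <= `|x|.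
Proof. by rewrite comp_Re; apply: le_trans (Re_bound _) _; rewrite norm_rm onorm_basis_conj mul1r. Qed.

Definition para (f : V -> V) := right_paralinear lm rm f.
Definition MP (f : V -> V) := forall m c, isreal m -> f (rm m c) = rm (f m) c.

Lemma paraE f p x : para f -> RV (rm (f x) p) = RV (f (rm x p)).
Proof. by move=> h; apply/eqP; rewrite -subr_eq0 -ReB; apply/eqP; exact: h. Qed.

Lemma para_mul f : flin f -> para f -> MP f.
Proof.
move=> fl fp m c hm.
suff : rm (f m) c - f (rm m c) = 0 by move/eqP; rewrite subr_eq0 => /eqP ->.
rewrite (recon (rm (f m) c - f (rm m c))) big1 // => j _.
set q := oconj (obasis j).
rewrite rmB ReB Re_assocR paraE // paraE // real_rmrm // subrr.
by rewrite rm0.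
Qed.

Lemma ext_form g : flin g -> MP g ->
  forall x, g x = \sum_(i < 8) rm (g (comp x i)) (obasis i).
Proof.
move=> gl gm x; rewrite {1}(decompE x) (f_sum gl); apply: eq_bigr => i _.
by rewrite -real_rm // gm.
Qed.

Lemma rodot_real f q m c : flin f -> MP f -> isreal m ->
  rodot lm rm f q (rm m c) = rm (rm (f m) q) c.
Proof.
move=> fl fm hm; rewrite /rodot /Bp.
have e1 : lm q (rm m c) = rm m (omul q c).
  by rewrite (real_rm m c hm) (real_lmlm m q c hm) (real_rm m (omul q c) hm).
rewrite e1 (fm m (omul q c) hm) (fm m c hm) (real_rmrm m c q hm) (fm m (omul c q) hm).
have := aR_alt (f m) q c; rewrite /assocR => /eqP.
rewrite subr_eq => /eqP ->.
by rewrite addrC.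
Qed.

Lemma lin3 (a : R) (A1 B1 C1 A2 B2 C2 : V) :
  (a *: A1 + A2) - ((a *: B1 + B2) - (a *: C1 + C2)) = a *: (A1 - (B1 - C1)) + (A2 - (B2 - C2)).
Proof.
rewrite !scalerBr addrACA -opprD; congr (_ - _).
by rewrite addrACA -opprD.
Qed.

Lemma rodot_flin f q : flin f -> flin (rodot lm rm f q).
Proof.
move=> fl a x y; rewrite /rodot /Bp lmL rmL !fl rmL.
exact: lin3.
Qed.

Lemma rodot_MP f q : flin f -> MP f -> MP (rodot lm rm f q).
Proof.
move=> fl fm m c hm; rewrite rodot_real //.
by rewrite -{2}(rm1 m) rodot_real // rm1.
Qed.

Lemma rodot_ext f q x : flin f -> MP f ->
  rodot lm rm f q x = \sum_(i < 8) rm (rm (f (comp x i)) q) (obasis i).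
Proof.
move=> fl fm; rewrite (@ext_form (rodot lm rm f q) (@rodot_flin f q fl) (@rodot_MP f q fl fm)).
by apply: eq_bigr => i _; rewrite -{1}(rm1 (comp x i)) rodot_real // rm1.
Qed.

Lemma lodot_Re f q x c : flin f -> para f ->
  RV (rm (lodot lm rm q f x) c) = RV (f (rm (rm x c) q)).
Proof.
move=> fl fp; rewrite /lodot /Bp rmD rmB ReD ReB.
rewrite Re_assocM Re_lm_rm !Re_assocR !paraE //.
have e : rm (rm x c) q = rm x (omul c q) + (rm x (omul q c) - rm (rm x q) c).
  have := aR_alt x c q; rewrite /assocR => /eqP; rewrite subr_eq => /eqP ->.
  by rewrite opprB addrC.
by rewrite e (fD fl) (fB fl) ReD ReB.
Qed.

Lemma sum8_le (F : 'I_8 -> R) c : (forall i, F i <= c) -> \sum_(i < 8) F i <= 8 * c.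
Proof.
move=> h; apply: le_trans (ler_sum _ (fun i _ => h i)) _.
by rewrite sumr_const card_ord -mulr_natl; lra.
Qed.

Lemma ext_flin h : flin h -> flin (Defs.ext lm rm h).
Proof.
move=> hl a x y; rewrite /Defs.ext scaler_sumr -big_split /=.
by apply: eq_bigr => i _; rewrite comp_lin hl rmL.
Qed.

Lemma ext_bound h B : 0 <= B -> (forall x, `|h x| <= B * `|x|) ->
  forall x, `|Defs.ext lm rm h x| <= (8 * B) * `|x|.
Proof.
move=> B0 hb x; rewrite /Defs.ext -mulrA.
apply: le_trans (ler_norm_sum _ _ _) _; apply: sum8_le => i.
rewrite norm_rm onorm_basis mul1r; apply: le_trans (hb _) _.
by apply: ler_wpM2l => //; exact: comp_bound.
Qed.

Lemma ext_para h : flin h -> para (Defs.ext lm rm h).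
Proof.
move=> hl p x; rewrite /Bp ReB; apply/eqP; rewrite subr_eq0; apply/eqP.
have -> : Defs.ext lm rm h (rm x p) = \sum_(i < 8) rm (h (comp x i)) (omul (obasis i) p).
  rewrite /Defs.ext.
  under eq_bigr do rewrite comp_rm (f_sum hl) rm_sum.
  rewrite exchange_big /=; apply: eq_bigr => i _.
  by rewrite rm_expand; apply: eq_bigr => j _; rewrite (fZ hl) rmZ.
rewrite /Defs.ext rm_sum !Re_sum; apply: eq_bigr => i _.
exact: Re_assocR.
Qed.

Lemma lif_flin g : flin g -> flin (Defs.lif rm g).
Proof.
move=> gl a x y; rewrite /Defs.lif scaler_sumr -big_split /=.
by apply: eq_bigr => i _; rewrite rmL gl rmL.
Qed.

Lemma lif_bound g B : 0 <= B -> (forall x, `|g x| <= B * `|x|) ->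
  forall x, `|Defs.lif rm g x| <= (8 * B) * `|x|.
Proof.
move=> B0 hb x; rewrite /Defs.lif -mulrA.
apply: le_trans (ler_norm_sum _ _ _) _; apply: sum8_le => i.
rewrite norm_rm onorm_basis mul1r; apply: le_trans (hb _) _.
by rewrite norm_rm onorm_basis_conj mul1r.
Qed.

Lemma Re_lif g y : (forall z, isreal (g z)) -> RV (Defs.lif rm g y) = g y.
Proof.
move=> gr; rewrite /Defs.lif Re_sum.
under eq_bigr do rewrite Re_rm_real // ore_basis.
rewrite (bigD1 o0) //= scale1r big1 ?addr0.
  by rewrite conj_basis0 rm1.
by move=> k /negbTE ->; rewrite scale0r.
Qed.

Lemma lif_para g : flin g -> (forall z, isreal (g z)) -> para (Defs.lif rm g).
Proof.
move=> gl gr p x; rewrite /Bp ReB Re_lif // /Defs.lif rm_sum Re_sum.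
under eq_bigr do rewrite Re_assocR Re_rm_real // -(fZ gl) -rmOZ basis_conj_coord rmOZ.
by rewrite -(f_sum gl) -rm_expand subrr.
Qed.

Lemma vec_lin2 (a : R) (A B C D : V) : (a *: A + B) - (a *: C + D) = a *: (A - C) + (B - D).
Proof. by rewrite scalerBr opprD addrACA. Qed.

Lemma assocR_linl y p q r a :
  assocR rm y (oadd (oscale a p) q) r = a *: assocR rm y p r + assocR rm y q r.
Proof. by rewrite /assocR rmO rmL omul_linl rmO vec_lin2. Qed.
Lemma assocR_linr y p q r a :
  assocR rm y r (oadd (oscale a p) q) = a *: assocR rm y r p + assocR rm y r q.
Proof. by rewrite /assocR rmO omul_linr rmO vec_lin2. Qed.
Lemma assocR_1l y r : assocR rm y oone r = 0.
Proof. by rewrite /assocR rm1 omul1l subrr. Qed.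
Lemma assocR_1r y r : assocR rm y r oone = 0.
Proof. by rewrite /assocR rm1 omul1r subrr. Qed.
Lemma assocR_0l y r : assocR rm y ozero r = 0.
Proof. by rewrite /assocR rmO0 rm0 omul0l rmO0 subrr. Qed.
Lemma assocR_0r y r : assocR rm y r ozero = 0.
Proof. by rewrite /assocR rmO0 omul0r rmO0 subrr. Qed.

Lemma assocR_sp s y a b c d : assocR rm y (sp s a b) (sp s c d) = 0.
Proof.
rewrite /sp -[oscale b s]oadd0 -[oscale d s]oadd0.
rewrite !assocR_linl !assocR_linr aR_pp !assocR_1l !assocR_1r !assocR_0l !assocR_0r.
by rewrite aR_pp !(scaler0, addr0).
Qed.

Lemma rm_spA s y a b c d : rm (rm y (sp s a b)) (sp s c d) = rm y (omul (sp s a b) (sp s c d)).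
Proof. by apply/eqP; rewrite -subr_eq0; apply/eqP; exact: assocR_sp. Qed.

Section Powers.
Variable s : oct R.
Hypothesis hs : onorm2 s != 0.
Local Notation a := (octinv s).
Local Notation pw n := (oexp (octinv s) n).

Lemma a_sp : a = sp s (2 * ore s * (onorm2 s)^-1) (- (onorm2 s)^-1).
Proof. by rewrite /octinv sp_inv. Qed.

Lemma pw_sp n : exists al be, pw n = sp s al be.
Proof.
elim: n => [|n [al [be IH]]]; first by exists 1, 0; rewrite -sp_one.
rewrite /oexp iterS -/(oexp _ _) IH a_sp sp_mul.
by eexists; eexists.
Qed.

Lemma s_pw n : omul s (pw n.+1) = pw n.
Proof.
have [al [be e]] := pw_sp n.
rewrite /oexp iterS -/(oexp _ _) e a_sp sp_mul {1}(sp_s s) sp_mul.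
congr (sp s _ _); field => //.
Qed.

Lemma pw_s n : omul (pw n.+1) s = pw n.
Proof.
have [al [be e]] := pw_sp n.
rewrite /oexp iterS -/(oexp _ _) e a_sp sp_mul.
set X := sp s _ _; have -> : omul X s = omul X (sp s 0 1) by rewrite -sp_s.
rewrite /X sp_mul.
congr (sp s _ _); field => //.
Qed.

Lemma SP1 y n : rm (rm y s) (pw n.+1) = rm y (pw n).
Proof.
have [al [be e]] := pw_sp n.+1.
by rewrite -(s_pw n) {1 3}(sp_s s) e rm_spA.
Qed.

Lemma SP2 y n : rm (rm y (pw n.+1)) s = rm y (pw n).
Proof.
have [al [be e]] := pw_sp n.+1.
by rewrite -(pw_s n) {2 4}(sp_s s) e rm_spA.
Qed.

Lemma onorm_pw n : onorm (pw n) = (onorm a) ^+ n.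
Proof.
elim: n => [|n IH]; first by rewrite expr0 /oexp /= onorm_one.
by rewrite /oexp iterS -/(oexp _ _) onormM IH exprS.
Qed.

End Powers.

Section Main.
Hypothesis Vc : forall u : nat -> V, cvgn [normed series u] -> cvgn (series u).
Variables (T : V -> V) (s : oct R) (C : R).
Hypotheses (TL : flin T) (pa : forall n, BRO lm rm (iter n T)) (C0 : 0 <= C)
  (hC : forall x, `|T x| <= C * `|x|) (hCs : C < onorm s).

Local Notation pw n := (oexp (octinv s) n).
Local Notation Tn n := (iter n T).

Lemma Tn_lin n : flin (Tn n). Proof. by case: (pa n) => [[h _] _]. Qed.
Lemma Tn_para n : para (Tn n). Proof. by case: (pa n). Qed.
Lemma Tn_MP n : MP (Tn n). Proof. exact: para_mul (Tn_lin n) (Tn_para n). Qed.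
Lemma Tn_bound n x : `|Tn n x| <= C ^+ n * `|x|.
Proof.
elim: n => [|n IH]; first by rewrite expr0 mul1r.
rewrite iterS; apply: le_trans (hC _) _; rewrite exprS -mulrA.
exact: ler_wpM2l.
Qed.

Lemma s_pos : 0 < onorm s. Proof. exact: le_lt_trans C0 hCs. Qed.
Lemma hs : onorm2 s != 0.
Proof.
apply/eqP => h; have : onorm s = 0 by rewrite /onorm h sqrtr0.
by move=> e; have := s_pos; rewrite e ltxx.
Qed.

Let rho := onorm (octinv s).
Lemma rhoE : rho = (onorm s)^-1. Proof. exact: onorm_inv hs. Qed.
Lemma rho_ge0 : 0 <= rho. Proof. by rewrite rhoE invr_ge0 ltW // s_pos. Qed.
Let k := C * rho.
Lemma k0 : 0 <= k. Proof. exact: mulr_ge0 C0 rho_ge0. Qed.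
Lemma k1 : k < 1.
Proof. by rewrite /k rhoE ltr_pdivrMr ?s_pos // mul1r. Qed.
Lemma pw1 : onorm (pw 1) = rho. Proof. by rewrite onorm_pw expr1. Qed.

Let K y := rm (T y) (pw 1).
Lemma KL : forall (a : R) x y, K (a *: x + y) = a *: K x + K y.
Proof. by move=> a x y; rewrite /K TL rmL. Qed.
Lemma Kb y : `|K y| <= k * `|y|.
Proof.
rewrite /K norm_rm pw1; apply: le_trans (ler_wpM2l rho_ge0 (hC y)) _.
by apply: le_of_eq; rewrite /k; ring.
Qed.

Let Sinv x := G K (rm x (pw 1)).
Let B := (1 - k)^-1 * rho.
Lemma B0 : 0 <= B.
Proof. by apply: mulr_ge0 rho_ge0; rewrite invr_ge0 subr_ge0 ltW // k1. Qed.

Lemma Sinv_lin : flin Sinv.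
Proof. by move=> a x y; rewrite /Sinv rmL (G_lin Vc KL Kb k0 k1). Qed.
Lemma Sinv_bound x : `|Sinv x| <= B * `|x|.
Proof.
rewrite /Sinv; apply: le_trans (G_bound Vc Kb k0 k1 _) _.
by rewrite norm_rm pw1 /B mulrA.
Qed.
Lemma Sinv_left x : Sinv (rm x s - T x) = x.
Proof.
rewrite /Sinv rmB (SP1 s hs x 0) /= rm1.
exact: (G_left Vc KL Kb k0 k1 x).
Qed.
Lemma Sinv_right x : rm (Sinv x) s - T (Sinv x) = x.
Proof.
have hu : Sinv x - K (Sinv x) = rm x (pw 1) := G_right Vc KL Kb k0 k1 (rm x (pw 1)).
have hT : T (Sinv x) = rm (K (Sinv x)) s by rewrite /K (SP2 s hs (T (Sinv x)) 0) /= rm1.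
by rewrite hT -rmB hu (SP2 s hs x 0) /= rm1.
Qed.

Let z N m := \sum_(n < N) rm (Tn n m) (pw n.+1).

Lemma tel1 m N : isreal m -> rm (z N m) s - T (z N m) = m - rm (Tn N m) (pw N).
Proof.
move=> hm; elim: N => [|N IH].
  by rewrite /z big_ord0 rm0 (f0 TL) subrr /= rm1 subrr.
rewrite /z big_ord_recr /= -/(z N m) rmD (fD TL).
have -> : forall a b c d : V, a + b - (c + d) = (a - c) + (b - d).
  by move=> a b c d; rewrite opprD addrACA.
rewrite IH (SP2 s hs) -(Tn_MP N m (pw N.+1) hm) -iterS (Tn_MP N.+1 m (pw N.+1) hm).
by rewrite addrA subrK.
Qed.

Lemma z_eq m N : isreal m -> z N m = Sinv m - Sinv (rm (Tn N m) (pw N)).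
Proof. by move=> hm; rewrite -(fB Sinv_lin) -(tel1 m N hm) Sinv_left. Qed.

Lemma series1 x : (fun N => \sum_(n < N) rodot lm rm (Tn n) (pw n.+1) x) @ \oo -->
  Defs.ext lm rm Sinv x.
Proof.
apply: (@cvg_bound _ _ _ _ (fun N => (8 * B * `|x|) * k ^+ N)); first exact: geo0 _ k0 k1.
move=> N.
have -> : \sum_(n < N) rodot lm rm (Tn n) (pw n.+1) x = \sum_(i < 8) rm (z N (comp x i)) (obasis i).
  under eq_bigr do rewrite (rodot_ext _ _ _ (Tn_lin _) (Tn_MP _)).
  rewrite exchange_big /=; apply: eq_bigr => i _.
  by rewrite /z rm_sum.
rewrite /Defs.ext -sumrB.
under eq_bigr do rewrite -rmB z_eq // addrAC subrr add0r.
apply: le_trans (ler_norm_sum _ _ _) _.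
apply: le_trans (@sum8_le _ (B * (k ^+ N * `|x|)) _) (le_of_eq _); last by ring.
move=> i; rewrite norm_rm onorm_basis mul1r normrN.
apply: le_trans (Sinv_bound _) _; apply: ler_wpM2l; first exact: B0.
rewrite norm_rm onorm_pw -/rho.
apply: le_trans (ler_wpM2l (exprn_ge0 _ rho_ge0) (Tn_bound _ _)) _.
rewrite /k exprMn mulrA [rho ^+ N * _]mulrC; apply: ler_wpM2l.
  by apply: mulr_ge0; apply: exprn_ge0; [exact: C0 | exact: rho_ge0].
exact: comp_bound.
Qed.

Lemma telG y N : \sum_(n < N) RV (Tn n (rm y (pw n.+1))) =
  RV (Sinv y) - RV (Tn N (rm (Sinv y) (pw N))).
Proof.
elim: N => [|N IH]; first by rewrite big_ord0 /= rm1 subrr.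
rewrite big_ord_recr /= IH.
have ey : y = rm (Sinv y) s - T (Sinv y) by rewrite Sinv_right.
rewrite {3}ey rmB (fB (Tn_lin N)) ReB (SP1 s hs).
rewrite -(paraE _ (pw N.+1) (T (Sinv y)) (Tn_para N)) -iterSr (paraE _ _ _ (Tn_para N.+1)).
by rewrite addrA subrK.
Qed.

Lemma series2 x : (fun N => \sum_(n < N) lodot lm rm (pw n.+1) (Tn n) x) @ \oo -->
  Defs.lif rm (fun y => RV (Sinv y)) x.
Proof.
apply: (@cvg_bound _ _ _ _ (fun N => (8 * B * `|x|) * k ^+ N)); first exact: geo0 _ k0 k1.
move=> N.
set P := \sum_(n < N) _.
rewrite {1}(recon P) /Defs.lif -sumrB.
under eq_bigr do rewrite -rmB /P rm_sum Re_sum.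
under eq_bigr do under eq_bigr do rewrite (lodot_Re _ _ _ _ (Tn_lin _) (Tn_para _)).
under eq_bigr do rewrite telG addrAC subrr add0r.
apply: le_trans (ler_norm_sum _ _ _) _.
apply: le_trans (@sum8_le _ (B * (k ^+ N * `|x|)) _) (le_of_eq _); last by ring.
move=> i; rewrite norm_rm onorm_basis mul1r normrN.
apply: le_trans (Re_bound _) _.
apply: le_trans (Tn_bound _ _) _.
rewrite norm_rm onorm_pw -/rho.
rewrite mulrA. apply: le_trans (ler_wpM2l (mulr_ge0 (exprn_ge0 _ C0) (exprn_ge0 _ rho_ge0)) (Sinv_bound _)) _.
rewrite norm_rm onorm_basis_conj mul1r /k exprMn.
by apply: le_of_eq; ring.
Qed.

Lemma main_aux :
  exists Sinv : V -> V,
    bounded_linear Sinv /\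
    (forall x, Sinv (Rmul rm s x - T x) = x) /\
    (forall x, Rmul rm s (Sinv x) - T (Sinv x) = x) /\
    BRO lm rm (right_reg_inv lm rm Sinv) /\
    BRO lm rm (left_reg_inv lm rm Sinv) /\
    (forall x, (fun N : nat =>
        \sum_(n < N) rodot lm rm (iter n T) (oexp (octinv s) n.+1) x)
        @ \oo --> right_reg_inv lm rm Sinv x) /\
    (forall x, (fun N : nat =>
        \sum_(n < N) lodot lm rm (oexp (octinv s) n.+1) (iter n T) x)
        @ \oo --> left_reg_inv lm rm Sinv x).
Proof.
exists Sinv; rewrite /left_reg_inv /right_reg_inv /Rmul.
have gl : flin (fun y => RV (Sinv y)).
  by move=> a x y; rewrite /= Sinv_lin Re_flin.
have gb : forall y, `|RV (Sinv y)| <= B * `|y|.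
  by move=> y; apply: le_trans (Re_bound _) (Sinv_bound _).
split; first by split; [exact: Sinv_lin | exists B; exact: Sinv_bound].
split; first exact: Sinv_left.
split; first exact: Sinv_right.
split.
  split; last exact: ext_para Sinv_lin.
  by split; [exact: ext_flin Sinv_lin | exists (8 * B); exact: ext_bound B0 Sinv_bound].
split.
  split; last by apply: (@lif_para _ gl) => w; exact: comp_real.
  by split; [exact: (@lif_flin _ gl) | exists (8 * B); exact: (@lif_bound _ _ B0 gb)].
split; first exact: series1.
exact: series2.
Qed.

End Main.
End Bim.


Theorem mainTheorem3 (R : realType) (V : completeNormedModType R)
  (lm : oct R -> V -> V) (rm : V -> oct R -> V) (T : V -> V) (s : oct R) :
  Banach_Obimodule lm rm ->
  BRO lm rm T -> power_associative lm rm T ->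
  opnorm T < onorm s ->
  exists Sinv : V -> V,
    bounded_linear Sinv /\
    (forall x, Sinv (Rmul rm s x - T x) = x) /\
    (forall x, Rmul rm s (Sinv x) - T (Sinv x) = x) /\
    BRO lm rm (right_reg_inv lm rm Sinv) /\
    BRO lm rm (left_reg_inv lm rm Sinv) /\
    (forall x, (fun N : nat =>
        \sum_(n < N) rodot lm rm (iter n T) (oexp (octinv s) n.+1) x)
        @ \oo --> right_reg_inv lm rm Sinv x) /\
    (forall x, (fun N : nat =>
        \sum_(n < N) lodot lm rm (oexp (octinv s) n.+1) (iter n T) x)
        @ \oo --> left_reg_inv lm rm Sinv x).
Proof.
move=> HB [[TL [C1 hC1]] Tp] pa hlt.
have S0 : [set C : R | 0 <= C /\ forall x, `|T x| <= C * `|x|] `|C1|.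
  split; first exact: normr_ge0.
  move=> x; apply: le_trans (hC1 x) _; apply: ler_wpM2r; first exact: normr_ge0.
  exact: ler_norm.
have [C [C0 hC] hCs] := inf_lt (ex_intro _ _ S0) hlt.
exact: (@main_aux R V lm rm HB (@normed_cvg R V) T s C TL pa C0 hC hCs).
Qed.
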